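(* Let $\mathcal{M}=(S,\boldsymbol{\pi},\mathbf{R})$ be a labelled continuous-time Markov chain, $\Phi_1,\Phi_2$ CSL state formulae, $I\subseteq\mathbb{R}_{\ge0}$ an interval, and let $S_X$ and $S_O$ be the exclude-from-refinement and once-only sets for $\Phi_1U^I\Phi_2$ (defined in the context). Let $T=\langle s_{i1},s_{i2},\ldots,s_{iN_i}\rangle$ be one of the sequences returned by the procedure TogetherSeqs applied to $(\mathcal{M},S_X,S_O)$. Let $\omega$ be a path satisfying $\Phi_1U^I\Phi_2$ and let $t\in I$ be the earliest time with $\omega@t\models\Phi_2$ (and $\omega@t'\models\Phi_1$ for all $t'\in[0,t)$). Then up to time $t$, the states of $T$ can appear on $\omega$ only as complete consecutive blocks $\ldots s_{i1}t_{i1}s_{i2}t_{i2}\ldots s_{iN_i}t_{iN_i}\ldots$.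
   Context: A CTMC $(S,\boldsymbol{\pi},\mathbf{R})$ has finite state set, initial distribution $\boldsymbol{\pi}$ and rate matrix $\mathbf{R}$; paths $\omega=s_1t_1s_2t_2\ldots$ have $\boldsymbol{\pi}(s_1)>0$, $\mathbf{R}(s_i,s_{i+1})>0$, $t_i>0$ the sojourn time, $\omega@t$ the state at time $t$. $\omega\models\Phi_1U^I\Phi_2$ iff $\exists t\in I$ with $\omega@t\models\Phi_2$ and $\omega@t'\models\Phi_1$ for $t'\in[0,t)$; $U$ alone means $I=[0,\infty)$; $P_{=?}[\Psi]$ is the probability of $\Psi$ under the initial distribution. For each state $s$ an atomic proposition $s$ holds exactly in $s$. $S_X=\{s\in S\mid P_{=?}[(\neg s\wedge\Phi_1)U\Phi_2]=P_{=?}[\Phi_1U\Phi_2]\}$. $S_O$ is the set of $s\in S\setminus S_X$ with $P_{=?}[\Phi_1U\Phi_2]>0$, $P_{=?}[(\neg s\wedge\Phi_1)U\Phi_2]=0$, and such that for every $s'$ reachable from $s$ in one step with positive probability, the probability from $s'$ of reaching $s$ without passing through $S_X$ is $0$. Procedure TogetherSeqs: set $States:=S\setminus(S_X\cup S_O)$ and $TS:=\emptyset$. While $States\ne\emptyset$: pick any $s\in States$, set $T:=\langle s\rangle$, remove $s$ from $States$; then repeatedly (while at least one direction is still open and $States\ne\emptyset$) try to extend $T$ to the left by $\mathrm{Pred}(\mathrm{head}(T))$ and to the right by $\mathrm{Succ}(\mathrm{tail}(T))$, removing each added state from $States$ and closing a direction once its function returns NIL; finally add $T$ to $TS$. Return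 $TS$. Here $\mathrm{Pred}(s)$ returns NIL if $\boldsymbol{\pi}(s)>0$, and otherwise returns some $s'\in States$ with $\mathbf{R}(s',s)>0$ and $\mathbf{R}(s',s'')=\mathbf{R}(s'',s)=0$ for all $s''\in S\setminus\{s,s'\}$, or NIL if none exists; $\mathrm{Succ}(s)$ returns some $s'\in States$ with $\boldsymbol{\pi}(s')=0$, $\mathbf{R}(s,s')>0$ and $\mathbf{R}(s,s'')=\mathbf{R}(s'',s')=0$ for all $s''\in S\setminus\{s,s'\}$, or NIL if none exists. *)

(* Defs.v *)
From mathcomp Require Import all_boot all_order all_algebra.
From mathcomp Require Import boolp classical_sets reals.
Set Implicit Arguments. Unset Strict Implicit. Unset Printing Implicit Defensive.
Import Order.TTheory GRing.Theory Num.Theory.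
Local Open Scope ring_scope.
Local Open Scope classical_set_scope.

Section CTMC.
Variables (R : realType) (S : finType).

Record ctmc := CTMC { init : S -> R ; rate : S -> S -> R }.

Definition is_ctmc (M : ctmc) : Prop :=
  [/\ forall s, 0 <= init M s, \sum_(s : S) init M s = 1
    & forall s s', 0 <= rate M s s'].

Definition exit_rate (M : ctmc) (s : S) : R := \sum_(s' : S) rate M s s'.
Definition emb (M : ctmc) (s s' : S) : R :=
  if exit_rate M s == 0 then 0 else rate M s s' / exit_rate M s.

Fixpoint reachn (M : ctmc) (Phi1 Phi2 : pred S) (n : nat) (s : S) : R :=
  if Phi2 s then 1 else
  match n with
  | 0 => 0
  | n'.+1 => if Phi1 s then \sum_(s' : S) emb M s s' * reachn M Phi1 Phi2 n' s'
             else 0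
  end.

(** Probability of the unbounded until Phi1 U Phi2 from state s
    (= probability in the embedded DTMC; supremum of the step-bounded ones). *)
Definition prob_from (M : ctmc) (Phi1 Phi2 : pred S) (s : S) : R :=
  sup (range (fun n => reachn M Phi1 Phi2 n s)).

Definition prob (M : ctmc) (Phi1 Phi2 : pred S) : R :=
  \sum_(s : S) init M s * prob_from M Phi1 Phi2 s.

Definition SX (M : ctmc) (Phi1 Phi2 : pred S) : {set S} :=
  [set s | prob M [pred x | (x != s) && Phi1 x] Phi2 == prob M Phi1 Phi2].

Definition SO (M : ctmc) (Phi1 Phi2 : pred S) : {set S} :=
  [set s | [&& s \notin SX M Phi1 Phi2,
              0 < prob M Phi1 Phi2,
              prob M [pred x | (x != s) && Phi1 x] Phi2 == 0 &
              [forall s', (0 < rate M s s') ==>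
                 (prob_from M [pred x | x \notin SX M Phi1 Phi2] (pred1 s) s' == 0)]]].

Definition pred_cand (M : ctmc) (St : {set S}) (s s' : S) : Prop :=
  [/\ s' \in St, 0 < rate M s' s &
      forall s'', s'' != s -> s'' != s' -> rate M s' s'' = 0 /\ rate M s'' s = 0].

Definition pred_res (M : ctmc) (St : {set S}) (s : S) (r : option S) : Prop :=
  match r with
  | None => 0 < init M s \/ ~ (exists s', pred_cand M St s s')
  | Some s' => ~ (0 < init M s) /\ pred_cand M St s s'
  end.

Definition succ_cand (M : ctmc) (St : {set S}) (s s' : S) : Prop :=
  [/\ s' \in St, init M s' = 0, 0 < rate M s s' &
      forall s'', s'' != s -> s'' != s' -> rate M s s'' = 0 /\ rate M s'' s' = 0].

Definition succ_res (M : ctmc) (St : {set S}) (s : S) (r : option S) : Prop :=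
  match r with
  | None => ~ (exists s', succ_cand M St s s')
  | Some s' => succ_cand M St s s'
  end.

Inductive left_step (M : ctmc) :
    {set S} -> seq S -> bool -> {set S} -> seq S -> bool -> Prop :=
| ls_closed St T : left_step M St T false St T false
| ls_nil St x T : pred_res M St x None ->
    left_step M St (x :: T) true St (x :: T) false
| ls_some St x T s' : pred_res M St x (Some s') ->
    left_step M St (x :: T) true (St :\ s') (s' :: x :: T) true.

Inductive right_step (M : ctmc) :
    {set S} -> seq S -> bool -> {set S} -> seq S -> bool -> Prop :=
| rs_closed St T : right_step M St T false St T false
| rs_nil St x T : succ_res M St (last x T) None ->
    right_step M St (x :: T) true St (x :: T) false
| rs_some St x T s' : succ_res M St (last x T) (Some s') ->
    right_step M St (x :: T) true (St :\ s') (rcons (x :: T) s') true.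

(** inner loop: grow M St T lo ro St' T' : starting from States = St, current
    sequence T and open directions lo/ro, the loop may end with States = St'
    and sequence T' *)
Inductive grow (M : ctmc) :
    {set S} -> seq S -> bool -> bool -> {set S} -> seq S -> Prop :=
| grow_stop St T lo ro : ~~ (lo || ro) || (St == finset.set0) ->
    grow M St T lo ro St T
| grow_step St T lo ro St1 T1 lo1 St2 T2 ro2 St' T' :
    lo || ro -> St != finset.set0 ->
    left_step M St T lo St1 T1 lo1 ->
    right_step M St1 T1 ro St2 T2 ro2 ->
    grow M St2 T2 lo1 ro2 St' T' ->
    grow M St T lo ro St' T'.

Inductive together_loop (M : ctmc) :
    {set S} -> seq (seq S) -> seq (seq S) -> Prop :=
| tl_done TS : together_loop M finset.set0 TS TS
| tl_step (St : {set S}) TS s St' T TS' : s \in St ->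
    grow M (St :\ s) [:: s] true true St' T ->
    together_loop M St' (rcons TS T) TS' ->
    together_loop M St TS TS'.

Definition TogetherSeqs (M : ctmc) (SX SO : {set S}) (TS : seq (seq S)) : Prop :=
  together_loop M (~: (SX :|: SO)) [::] TS.

(** A path s_1 t_1 s_2 t_2 ...; a sojourn time None means t = infinity
    (finite path ending in an absorbing state; later entries irrelevant). *)
Record cpath := CPath { pst : nat -> S ; psj : nat -> option R }.

Definition is_path (M : ctmc) (w : cpath) : Prop :=
  0 < init M (pst w 0) /\
  forall i, (forall j, (j < i)%N -> psj w j != None) ->
    match psj w i with
    | Some r => 0 < r /\ 0 < rate M (pst w i) (pst w i.+1)
    | None => forall s', rate M (pst w i) s' = 0
    end.

Definition entry (w : cpath) (k : nat) : R := \sum_(j < k) odflt 0 (psj w j).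

Definition at_time (w : cpath) (u : R) (s : S) : Prop :=
  exists k, [/\ forall j, (j < k)%N -> psj w j != None,
               entry w k <= u,
               (match psj w k with Some r => u < entry w k + r | None => True end)
             & pst w k = s].

Definition sat_at (w : cpath) (u : R) (Phi : pred S) : Prop :=
  exists s, at_time w u s /\ Phi s.

Definition until_sat (w : cpath) (Phi1 Phi2 : pred S) (I : set R) : Prop :=
  exists t, [/\ I t, sat_at w t Phi2 &
                forall t', 0 <= t' < t -> sat_at w t' Phi1].

Definition nonneg_interval (I : set R) : Prop :=
  (forall x, I x -> 0 <= x) /\
  (forall x y z, I x -> I z -> x <= y -> y <= z -> I y).

End CTMC.

(* Main.v *)
Require Import Defs.
From mathcomp Require Import all_boot all_order all_algebra.
From mathcomp Require Import boolp classical_sets reals.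
From mathcomp Require Import zify.
Set Implicit Arguments. Unset Strict Implicit. Unset Printing Implicit Defensive.
Import Order.TTheory GRing.Theory Num.Theory.
Local Open Scope ring_scope.
Local Open Scope classical_set_scope.

Section Proofs.
Variables (R : realType) (S : finType).
Implicit Types (M : ctmc R S) (w : cpath R S).

Lemma entryS w k : entry w k.+1 = entry w k + odflt 0 (psj w k).
Proof. by rewrite /entry big_ord_recr. Qed.

Lemma entry0 w : entry w 0 = 0.
Proof. by rewrite /entry big_ord0. Qed.

Definition Good w n := forall j, (j < n)%N -> exists2 r, psj w j = Some r & 0 < r.

Lemma entry_mono w n p q : Good w n -> (p <= q)%N -> (q <= n)%N ->
  entry w p <= entry w q.
Proof.
move=> G; elim: q => [|q IH] pq qn.
  by rewrite leqn0 in pq; rewrite (eqP pq).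
rewrite leq_eqVlt in pq; case/orP: pq => [/eqP -> //|pq].
rewrite ltnS in pq.
rewrite entryS; have [r -> r0] := G q qn.
apply: le_trans (IH pq (ltnW qn)) _ => /=; rewrite lerDl ltW //.
Qed.

Lemma entry_lt w n p q : Good w n -> (p < q)%N -> (q <= n)%N ->
  entry w p < entry w q.
Proof.
move=> G pq qn.
have H := entry_mono G pq qn.
apply: (lt_le_trans _ H).
rewrite entryS; have [r -> r0] := G p (leq_trans pq qn).
by rewrite /= ltrDl.
Qed.

Lemma locate w n v p1 p2 : Good w n -> (p1 <= p2)%N -> (p2 <= n)%N ->
  entry w p1 <= v < entry w p2 ->
  exists p, (p1 <= p < p2)%N /\ entry w p <= v < entry w p.+1.
Proof.
move=> G; elim: p2 => [|p2 IH] h1 h2 /andP[a b].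
  by rewrite leqn0 in h1; rewrite (eqP h1) in a; have := le_lt_trans a b; rewrite ltxx.
rewrite leq_eqVlt in h1; case/orP: h1 => [/eqP E|h1].
  by rewrite E in a; have := le_lt_trans a b; rewrite ltxx.
rewrite ltnS in h1.
case: (boolP (v < entry w p2)) => hv.
  have [p [hp1 hp2]] := IH h1 (ltnW h2) (introT andP (conj a hv)).
  by exists p; split => //; lia.
exists p2; split; first lia.
by rewrite -leNgt in hv; rewrite hv b.
Qed.

Lemma good_of_pre M w n : is_path M w ->
  (forall j, (j < n)%N -> psj w j != None) -> Good w n.
Proof.
move=> [_ Hp] pre j jn.
have := Hp j (fun j' hj => pre j' (ltn_trans hj jn)).
case E: (psj w j) => [r|]; first by move=> [r0 _]; exists r.
by move: (pre j jn); rewrite E.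
Qed.

Lemma step_rate M w n i : is_path M w -> Good w n -> (i < n)%N ->
  0 < rate M (pst w i) (pst w i.+1).
Proof.
move=> [_ Hp] G iK.
have pre : forall j, (j < i)%N -> psj w j != None.
  by move=> j ji; have [r -> _] := G j (ltn_trans ji iK).
have := Hp i pre; have [r -> _] := G i iK; by case.
Qed.

Definition link M x y := [/\ 0 < rate M x y,
  (forall z, z != x -> z != y -> rate M x z = 0 /\ rate M z y = 0) & init M y = 0].

Fixpoint chainP M (T : seq S) : Prop :=
  match T with x :: ((y :: _) as T') => link M x y /\ chainP M T' | _ => True end.

Lemma chain_nth M T d m : chainP M T -> (m.+1 < size T)%N ->
  link M (nth d T m) (nth d T m.+1).
Proof.
elim: T m => [|x T IH] m //=; case: T IH => [|y T] IH //= [Hl Hc].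
case: m => [|m] //= Hm; exact: (IH m Hc Hm).
Qed.

Lemma chain_rcons M x T s' : chainP M (x :: T) -> link M (last x T) s' ->
  chainP M (rcons (x :: T) s').
Proof.
elim: T x => [|y T IH] x /=; first by [].
by move=> [Hl Hc] Hs; split => //; apply: IH.
Qed.

Variable St0 : {set S}.

Lemma left_inv M St T lo St' T' lo' : is_ctmc M -> left_step M St T lo St' T' lo' ->
  chainP M T -> {subset St <= St0} -> {subset T <= St0} ->
  [/\ chainP M T', {subset St' <= St0} & {subset T' <= St0}].
Proof.
move=> [Hi _ _]; case => // {St T lo St' T' lo'} St x T s' [Hn [Hs Hr Hz]] Hc H1 H2.
split.
- split => //; split => //.
    by move=> z z1 z2; apply: Hz.
  by have := Hi x; rewrite le_eqVlt => /orP[/eqP <- //|/Hn].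
- by move=> z; rewrite in_setD1 => /andP[_ /H1].
- by move=> z; rewrite inE => /orP[/eqP -> |]; [apply: H1|apply: H2].
Qed.

Lemma right_inv M St T lo St' T' lo' : right_step M St T lo St' T' lo' ->
  chainP M T -> {subset St <= St0} -> {subset T <= St0} ->
  [/\ chainP M T', {subset St' <= St0} & {subset T' <= St0}].
Proof.
case => // {St T lo St' T' lo'} St x T s' [Hs Hi Hr Hz] Hc H1 H2.
split.
- by apply: chain_rcons.
- by move=> z; rewrite in_setD1 => /andP[_ /H1].
- by move=> z; rewrite mem_rcons inE => /orP[/eqP -> |]; [apply: H1|apply: H2].
Qed.

Lemma grow_inv M St T lo ro St' T' : is_ctmc M -> grow M St T lo ro St' T' ->
  chainP M T -> {subset St <= St0} -> {subset T <= St0} ->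
  [/\ chainP M T', {subset St' <= St0} & {subset T' <= St0}].
Proof.
move=> Hc; elim => // {St T lo ro St' T'}.
move=> St T lo ro St1 T1 lo1 St2 T2 ro2 St' T' _ _ Hl Hr _ IH C1 C2 C3.
have [D1 D2 D3] := left_inv Hc Hl C1 C2 C3.
have [E1 E2 E3] := right_inv Hr D1 D2 D3.
exact: IH.
Qed.

Lemma loop_inv M St TS TS' : is_ctmc M -> together_loop M St TS TS' ->
  {subset St <= St0} -> (forall T, T \in TS -> chainP M T /\ {subset T <= St0}) ->
  forall T, T \in TS' -> chainP M T /\ {subset T <= St0}.
Proof.
move=> Hc; elim => // {St TS TS'}.
move=> St TS s St' T TS' sS Hg _ IH C1 C2; apply: IH.
  have [] := grow_inv Hc Hg => //.
  - by move=> z; rewrite in_setD1 => /andP[_ /C1].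
  - by move=> z; rewrite inE => /eqP ->; apply: C1.
move=> T0; rewrite mem_rcons inE => /orP[/eqP ->|/C2 //].
have [] := grow_inv Hc Hg => //.
- by move=> z; rewrite in_setD1 => /andP[_ /C1].
- by move=> z; rewrite inE => /eqP ->; apply: C1.
Qed.


Lemma reachn_eq M (Phi1 Phi2 : pred S) s n x : Phi2 s ->
  reachn M [pred y | (y != s) && Phi1 y] Phi2 n x = reachn M Phi1 Phi2 n x.
Proof.
move=> H2s; elim: n x => [|n IH] x /=; case: ifP => // H2.
have xs : x != s by apply/eqP => E; rewrite E H2s in H2.
rewrite xs /=; case: ifP => // _; apply: eq_bigr => y _; by rewrite IH.
Qed.

Lemma Phi2_SX M (Phi1 Phi2 : pred S) s : Phi2 s -> s \in SX M Phi1 Phi2.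
Proof.
move=> H2s; rewrite inE /prob; apply/eqP; apply: eq_bigr => y _.
rewrite /prob_from.
have -> : (fun n => reachn M [pred x | (x != s) && Phi1 x] Phi2 n y) =
          (fun n => reachn M Phi1 Phi2 n y).
  by apply: funext => n; apply: reachn_eq.
by [].
Qed.

Lemma fwd M w T K d : is_path M w -> Good w K -> chainP M T -> pst w K \notin T ->
  forall i j, (i < K)%N -> (j < size T)%N -> pst w i = nth d T j ->
  exists e : nat -> nat, [/\ e j = i, (e (size T) <= K)%N &
    forall m, (j <= m < size T)%N -> (e m < e m.+1)%N /\
      forall p, (e m <= p < e m.+1)%N -> pst w p = nth d T m].
Proof.
move=> Hp GK Hch nK i j iK; move: {2}(K - i)%N (leqnn (K - i)%N) => n.
elim: n i j iK => [|n IH] i j iK hn jN Ei; first by lia.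
case: (ltnP j.+1 (size T)) => hj; last first.
  exists (fun m => if m == j then i else i.+1); split.
  - by rewrite eqxx.
  - by have -> : (size T == j) = false by apply/eqP; lia.
  move=> m hm; have -> : m = j by lia.
  rewrite eqxx; have -> : (j.+1 == j) = false by apply/eqP; lia.
  split => // p hp; have -> : p = i by lia.
  by [].
have [r0 hz _] := chain_nth d Hch hj.
have R0 := step_rate Hp GK iK.
have inT : forall q, (q < size T)%N -> pst w i.+1 = nth d T q -> (i.+1 < K)%N.
  move=> q hq E; rewrite ltn_neqAle iK andbT; apply/eqP => E2.
  by move: nK; rewrite -E2 E mem_nth.
case: (eqVneq (pst w i.+1) (nth d T j)) => [E1|N1].
  have iK' := inT j jN E1.
  have [e' [e1 e2 e3]] := IH i.+1 j iK' ltac:(lia) jN E1.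
  exists (fun m => if m == j then i else e' m); split.
  - by rewrite eqxx.
  - by have -> : (size T == j) = false by apply/eqP; lia.
  move=> m hm; case: (eqVneq m j) => [->|mj].
    have [h1 h2] := e3 j ltac:(lia).
    have -> : (j.+1 == j) = false by apply/eqP; lia.
    rewrite e1 in h1 h2; split; first lia.
    move=> p hp; case: (eqVneq p i) => [-> //|pi]; apply: h2; lia.
  have -> : (m.+1 == j) = false by apply/eqP; lia.
  apply: e3; lia.
case: (eqVneq (pst w i.+1) (nth d T j.+1)) => [E2|N2]; last first.
  by rewrite Ei (hz _ N1 N2).1 ltxx in R0.
have iK' := inT j.+1 hj E2.
have [e' [e1 e2 e3]] := IH i.+1 j.+1 iK' ltac:(lia) hj E2.
exists (fun m => if m == j then i else e' m); split.
- by rewrite eqxx.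
- by have -> : (size T == j) = false by apply/eqP; lia.
move=> m hm; case: (eqVneq m j) => [->|mj].
  have -> : (j.+1 == j) = false by apply/eqP; lia.
  rewrite e1; split; first lia.
  by move=> p hp; have -> : p = i by lia.
have -> : (m.+1 == j) = false by apply/eqP; lia.
apply: e3; lia.
Qed.

Lemma bwd M w T K d : is_path M w -> Good w K -> chainP M T ->
  forall i j, (i <= K)%N -> (j < size T)%N -> pst w i = nth d T j ->
  exists b : nat -> nat, [/\ (b j <= i)%N, (b 0 <= i)%N,
    (forall p, (b j <= p <= i)%N -> pst w p = nth d T j) &
    forall m, (m < j)%N -> (b m < b m.+1)%N /\
      forall p, (b m <= p < b m.+1)%N -> pst w p = nth d T m].
Proof.
move=> Hp GK Hch; elim => [|i IH] j iK jN Ei.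
  case: j jN Ei => [|j] jN Ei.
    exists (fun _ => 0%N); split => // p hp; have -> : p = 0%N by lia.
    by [].
  have [_ _ h0] := chain_nth d Hch jN.
  by move: Hp.1; rewrite Ei h0 ltxx.
case: j jN Ei => [|j] jN Ei.
  exists (fun _ => i.+1); split => // p hp; have -> : p = i.+1 by lia.
  by [].
have [r0 hz _] := chain_nth d Hch jN.
have R0 := step_rate Hp GK (iK : (i < K)%N).
case: (eqVneq (pst w i) (nth d T j.+1)) => [E1|N1].
  have [b [b1 b2 b3 b4]] := IH j.+1 (ltnW iK) jN E1.
  exists b; split => //; try lia.
  move=> p hp; case: (eqVneq p i.+1) => [-> //|pi]; apply: b3; lia.
case: (eqVneq (pst w i) (nth d T j)) => [E2|N2]; last first.
  by rewrite Ei (hz _ N2 N1).2 ltxx in R0.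
have [b [b1 b2 b3 b4]] := IH j (ltnW iK) (ltnW jN) E2.
exists (fun m => if m == j.+1 then i.+1 else b m); split.
- by rewrite eqxx.
- by rewrite /=; lia.
- rewrite eqxx => p hp; have -> : p = i.+1 by lia.
  by [].
move=> m hm; case: (eqVneq m j) => [->|mj].
  rewrite eqxx; have -> : (j == j.+1) = false by apply/eqP; lia.
  split; first lia.
  move=> p hp; apply: b3; lia.
have -> : (m == j.+1) = false by apply/eqP; lia.
have -> : (m.+1 == j.+1) = false by apply/eqP; lia.
apply: b4; lia.
Qed.


Lemma chain_le (c : nat -> nat) lo hi :
  (forall m, (lo <= m < hi)%N -> (c m < c m.+1)%N) ->
  forall m, (lo <= m <= hi)%N -> (c m <= c hi)%N.
Proof.
move=> H m /andP[h1 h2]; move: {2}(hi - m)%N (leqnn (hi - m)%N) => n.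
elim: n m h1 h2 => [|n IH] m h1 h2 hn.
  by have -> : m = hi by lia.
case: (eqVneq m hi) => [-> //|mh].
have := H m ltac:(lia); have := IH m.+1 ltac:(lia) ltac:(lia) ltac:(lia); lia.
Qed.

End Proofs.

Theorem theorem3' (R : realType) (S : finType) (M : ctmc R S)
    (Phi1 Phi2 : pred S) (I : set R) (TS : seq (seq S)) (T : seq S)
    (w : cpath R S) (t : R) :
  is_ctmc M ->
  nonneg_interval I ->
  TogetherSeqs M (SX M Phi1 Phi2) (SO M Phi1 Phi2) TS ->
  T \in TS ->
  is_path M w ->
  until_sat w Phi1 Phi2 I ->
  I t -> sat_at w t Phi2 -> (forall t', 0 <= t' < t -> sat_at w t' Phi1) ->
  (forall t'', I t'' -> sat_at w t'' Phi2 ->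
     (forall t', 0 <= t' < t'' -> sat_at w t' Phi1) -> t <= t'') ->
  forall (u : R) (s : S), 0 <= u < t -> at_time w u s -> s \in T ->
  exists a : nat -> R,
    [/\ 0 <= a 0%N, a 0%N <= u, u < a (size T), a (size T) <= t &
        forall j, (j < size T)%N ->
          a j < a j.+1 /\
          forall v, a j <= v < a j.+1 -> at_time w v (nth s T j)].
Proof.
move=> Hc _ HTS HT Hp _ It [s2 [[K [pre ent lt2 eK]] H2]] _ _ u s
  /andP[u0 ut] [k [prek entk ltk ek]] sT.
have [Hch Hsub] := loop_inv Hc HTS (fun z h => h) (fun T0 (h : T0 \in [::]) => False_ind _ (notF h)) HT.
have GK := good_of_pre Hp pre.
have Gk := good_of_pre Hp prek.
have nK : pst w K \notin T.
  apply/negP => /Hsub; rewrite eK !inE negb_or => /andP[/negP nx _].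
  by apply: nx; have := Phi2_SX M Phi1 H2; rewrite inE.
have kK : (k < K)%N.
  case: (ltngtP k K) => // h.
    have [r E r0] := Gk K h.
    rewrite E /= -(addr0 (entry w K)) in lt2.
    have : entry w K + r = entry w K.+1 by rewrite entryS E.
    move=> E2; rewrite addr0 E2 in lt2.
    have := entry_mono Gk h (leqnn k).
    move=> h2; have := lt_le_trans lt2 h2; move=> h3.
    have := le_lt_trans (le_trans (ltW h3) entk) ut; by rewrite ltxx.
  by move: nK; rewrite -h ek sT.
set j := index s T.
have jN : (j < size T)%N by rewrite index_mem.
have Ek : pst w k = nth s T j by rewrite nth_index.
have [e [e1 e2 e3]] := fwd Hp GK Hch nK kK jN Ek.
have [b [b1 b2 b3 b4]] := bwd Hp GK Hch (ltnW kK) jN Ek.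
set c := fun m => if (m <= j)%N then b m else e m.
have cc : forall m, (m < size T)%N -> (c m < c m.+1)%N /\
      forall p, (c m <= p < c m.+1)%N -> pst w p = nth s T m.
  move=> m mN; rewrite /c /=; case: (ltngtP m j) => hm.
  - exact: b4.
  - apply: e3; lia.
  - rewrite hm.
    have [h1 h2] := e3 j ltac:(lia); rewrite e1 in h1 h2.
    split; first lia.
    move=> p hp; case: (leqP p k) => hpk.
      apply: b3; lia.
    apply: h2; lia.
have cN : c (size T) = e (size T) by rewrite /c; have -> : (size T <= j)%N = false by lia.
have c0 : c 0%N = b 0%N by [].
have kcN : (k < c (size T))%N.
  rewrite cN; have [h1 _] := e3 j ltac:(lia); rewrite e1 in h1.
  have := chain_le (c := e) (lo := j) (hi := size T) (fun m hm => (e3 m hm).1) (m := j.+1) ltac:(lia).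
  lia.
have cK : forall m, (m <= size T)%N -> (c m <= K)%N.
  move=> m hm; have := chain_le (c := c) (lo := 0) (hi := size T) (fun m hm => (cc m ltac:(lia)).1) (m := m) ltac:(lia).
  lia.
exists (fun m => entry w (c m)); split.
- by rewrite -(entry0 w); apply: (entry_mono GK) => //; exact: cK.
- apply: le_trans entk; apply: (entry_mono GK); [exact: b2|exact: ltnW].
- have [r E r0] := GK k kK.
  rewrite E /= in ltk.
  have E1 : entry w k.+1 = entry w k + r by rewrite entryS E.
  apply: lt_le_trans ltk _; rewrite -E1.
  exact: (entry_mono GK kcN (cK _ (leqnn _))).
- apply: le_trans _ ent; exact: (entry_mono GK (cK _ (leqnn _)) (leqnn K)).
move=> m mN; have [h1 h2] := cc m mN; split.
  exact: (entry_lt GK h1 (cK _ mN)).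
move=> v hv.
have [p [hp1 hp2]] := locate GK (ltnW h1) (cK _ mN) hv.
have pK : (p < K)%N := leq_trans (proj2 (andP hp1)) (cK _ mN).
exists p; split.
- move=> q hq; have [r -> _] := GK q (ltn_trans hq pK); by [].
- by case/andP: hp2.
- have [r E _] := GK p pK.
  rewrite E; case/andP: hp2 => _; by rewrite entryS E.
- exact: h2.
Qed.

Unset Implicit Arguments. Set Strict Implicit.

Theorem theorem3 (R : realType) (S : finType) (M : ctmc R S)
    (Phi1 Phi2 : pred S) (I : set R) (TS : seq (seq S)) (T : seq S)
    (w : cpath R S) (t : R) :
  is_ctmc M ->
  nonneg_interval I ->
  TogetherSeqs M (SX M Phi1 Phi2) (SO M Phi1 Phi2) TS ->
  T \in TS ->
  is_path M w ->
  until_sat w Phi1 Phi2 I ->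
  (* t is the earliest witness time of Phi1 U^I Phi2 on w *)
  I t -> sat_at w t Phi2 -> (forall t', 0 <= t' < t -> sat_at w t' Phi1) ->
  (forall t'', I t'' -> sat_at w t'' Phi2 ->
     (forall t', 0 <= t' < t'' -> sat_at w t' Phi1) -> t <= t'') ->
  (* up to time t, states of T only occur inside complete consecutive blocks
     s_i1 t_i1 s_i2 t_i2 ... s_iN t_iN *)
  forall (u : R) (s : S), 0 <= u < t -> at_time w u s -> s \in T ->
  exists a : nat -> R,
    [/\ 0 <= a 0%N, a 0%N <= u, u < a (size T), a (size T) <= t &
        forall j, (j < size T)%N ->
          a j < a j.+1 /\
          forall v, a j <= v < a j.+1 -> at_time w v (nth s T j)].
Proof. exact: theorem3'. Qed.
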